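(* Let $f\in\mathscr C_J\setminus\mathscr C_I$, let $M=\{1,\dots,m\}$, and let $q$ be a hereditarily thrifty partial function from $X^M$ to $X$ which belongs to $\mathscr C_J$. Then $q$ can be written as a term over $f$ and finitely many partial functions belonging to $\mathscr C_I$, i.e. $q$ equals a partial function obtained by composing $f$ and finitely many partial functions in $\mathscr C_I$ (composition of partial functions being defined exactly where all inner values are defined and lie in the domain of the outer function).
   Context: $X=\omega\times\omega$, elements $(a|b)$ ($x$-coordinate $a$, $y$-coordinate $b$). Width of $Y\subseteq X$: $\sup_n|Y\cap(\omega\times\{n\})|$; $I$ = ideal of subsets of $X$ of finite width; $J$ = ideal of subsets of $X$ meeting each line $\omega\times\{n\}$ in a finite set. For an ideal $K$, $\mathscr C_K$ is the set of finitary operations $g:X^k\to X$ with $g[A^k]\in K$ for all $A\in K$; a partial function from $X^M$ to $X$ is in $\mathscr C_K$ iff it has a total extension in $\mathscr C_K$. For a finite index set $N$, $B^N_k=\{u\in X^N:\exists i\in N\,((u_i)^y<k)\}$; a subset of $X^N$ is bounded iff contained in some $B^N_k$; a partial $p$ from $X^N$ to $Y$ is thrifty iff $p^{-1}[d]$ is bounded for all $d\in Y$. For $S\subseteq M$, $T=M\setminus S$, $c\in X^S$: $p_{\cup c}$ is the partial function on $X^T$ with $p_{\cup c}(z)=p(z\cup c)$. $p$ is hereditarily thrifty iff $p_{\cup c}$ is thrifty for every proper subset $S\subsetneq M$ and every $c\in X^S$. *)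

(* Defs.v *)
From Stdlib Require List.
From mathcomp Require Import all_boot.
Set Implicit Arguments. Unset Strict Implicit. Unset Printing Implicit Defensive.

(* X = omega x omega; a point (a|b) is the pair (a, b): x-coordinate a = .1,
   y-coordinate b = .2 *)
Definition X := (nat * nat)%type.

Definition subset_X := X -> Prop.

Definition inJ (A : subset_X) : Prop :=
  forall n : nat, exists s : seq nat, forall a, A (a, n) -> a \in s.

Definition inI (A : subset_X) : Prop :=
  exists w : nat, forall n : nat, exists s : seq nat,
    size s <= w /\ forall a, A (a, n) -> a \in s.

Definition op (k : nat) := {ffun 'I_k -> X} -> X.
Definition pfun (N : finType) := {ffun N -> X} -> option X.

Definition image_pow (k : nat) (g : op k) (A : subset_X) : subset_X :=
  fun y => exists u : {ffun 'I_k -> X}, (forall i, A (u i)) /\ g u = y.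

Definition inC (K : subset_X -> Prop) (k : nat) (g : op k) : Prop :=
  forall A, K A -> K (image_pow g A).

Definition pinC (K : subset_X -> Prop) (k : nat) (p : pfun 'I_k) : Prop :=
  exists g : op k, inC K g /\ forall u y, p u = Some y -> g u = y.

(* a subset of X^N is bounded iff contained in some B^N_k *)
Definition bounded (N : finType) (P : {ffun N -> X} -> Prop) : Prop :=
  exists k : nat, forall u, P u -> exists i : N, (u i).2 < k.

Definition thrifty (N : finType) (p : pfun N) : Prop :=
  forall d : X, bounded (fun u => p u = Some d).

Definition glue (N : finType) (S : {set N})
    (c : {ffun {i : N | i \in S} -> X}) (z : {ffun {i : N | i \notin S} -> X})
    : {ffun N -> X} :=
  [ffun i => match (insub i : option {j : N | j \in S}) with
             | Some j => c j
             | None => match (insub i : option {j : N | j \notin S}) with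
                       | Some j => z j
                       | None => (0, 0)  (* unreachable *)
                       end
             end].

Arguments glue {N} S c z.
Definition pcup (N : finType) (p : pfun N) (S : {set N})
    (c : {ffun {i : N | i \in S} -> X}) : pfun {i : N | i \notin S} :=
  fun z => p (glue S c z).
Arguments pcup {N} p S c _.

Definition hereditarily_thrifty (N : finType) (p : pfun N) : Prop :=
  forall S : {set N}, S \proper [set: N] ->
    forall c : {ffun {i : N | i \in S} -> X}, thrifty (pcup p S c).

Definition pop := {n : nat & pfun 'I_n}.

Definition compose (m n : nat) (g : pfun 'I_n) (ts : 'I_n -> pfun 'I_m)
    : pfun 'I_m :=
  fun x => if [forall j, ts j x != None]
           then g [ffun j => odflt (0, 0) (ts j x)]
           else None.

Inductive term_fn (m : nat) (allowed : pop -> Prop) : pfun 'I_m -> Prop :=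
| tf_var (i : 'I_m) : term_fn allowed (fun x => Some (x i))
| tf_app (o : pop) (ts : 'I_(projT1 o) -> pfun 'I_m) :
    allowed o -> (forall j, term_fn allowed (ts j)) ->
    term_fn allowed (compose (projT2 o) ts).

Definition total_pop (k : nat) (f : op k) : pop :=
  existT (fun n => pfun 'I_n) k (fun u => Some (f u)).

(* Main.v *)
Require Import Defs.
From Stdlib Require List.
From Stdlib Require Import ClassicalEpsilon.
From mathcomp Require Import all_boot.
Set Implicit Arguments. Unset Strict Implicit. Unset Printing Implicit Defensive.

Definition pdec (P : Prop) : bool :=
  if excluded_middle_informative P then true else false.
Lemma pdecP (P : Prop) : pdec P = true <-> P.
Proof. rewrite /pdec; case: excluded_middle_informative => //. Qed.

Lemma inI_inJ A : inI A -> inJ A.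
Proof. move=> [w Hw] n; have [s [_ Hs]] := Hw n; by exists s. Qed.

Lemma inI_mono (A B : subset_X) : (forall p, A p -> B p) -> inI B -> inI A.
Proof.
move=> HAB [w Hw]; exists w => n; have [s [Hs1 Hs2]] := Hw n.
by exists s; split => // a /HAB /Hs2.
Qed.

Lemma inI_add0 (A : subset_X) : inI A -> inI (fun p => A p \/ p = (0,0)).
Proof.
move=> [w Hw]; exists w.+1 => n; have [s [Hs1 Hs2]] := Hw n.
exists (0 :: s); split => // a [/Hs2 H|[-> _]]; rewrite inE ?H ?orbT //.
Qed.

Lemma inC_of_range (k : nat) (g : op k) (S : subset_X) :
  inI S -> (forall u, S (g u)) -> inC inI g.
Proof.
move=> HS Hg A _; apply: inI_mono HS => p [u [_ <-]]; exact: Hg.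
Qed.

Lemma size_flatten_le (T U : Type) (g : T -> seq U) (s : seq T) c :
  (forall a, size (g a) <= c) -> size (flatten [seq g a | a <- s]) <= size s * c.
Proof.
move=> Hg; elim: s => //= a s IH; rewrite size_cat mulSn leq_add //.
Qed.

Lemma In_map_mem (T : eqType) (U : Type) (g : T -> U) (s : seq T) y :
  y \in s -> List.In (g y) (map g s).
Proof.
elim: s => //= a s IH; rewrite inE => /orP [/eqP ->|/IH]; [left|right] => //.
Qed.

Lemma big_line (F : subset_X) : inJ F -> ~ inI F ->
  forall N, exists p : nat * seq nat,
    uniq p.2 /\ N <= size p.2 /\ forall a, a \in p.2 -> F (a, p.1).
Proof.
move=> HJ HnI N; apply: NNPP => Hn; apply: HnI; exists N => n.
have [t Ht] := HJ n.
pose s := [seq a <- undup t | pdec (F (a, n))].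
exists s; split; last first.
  move=> a Ha; rewrite mem_filter mem_undup Ht // andbT; exact/pdecP.
rewrite leqNgt; apply/negP => Hlt; apply: Hn; exists (n, s); split => /=.
  exact/filter_uniq/undup_uniq.
split; first exact: ltnW.
by move=> a; rewrite mem_filter => /andP [/pdecP].
Qed.

Section KLemma.
Variable m : nat.
Variable q : pfun 'I_m.
Variable gJ : op m.
Hypothesis HgJ : inC inJ gJ.
Hypothesis HgJe : forall u y, q u = Some y -> gJ u = y.
Hypothesis HT : hereditarily_thrifty q.

Definition agree (S : {set 'I_m}) (v x : {ffun 'I_m -> X}) :=
  forall i, i \in S -> x i = v i.

Lemma glue_restr (S : {set 'I_m}) (v x : {ffun 'I_m -> X}) :
  agree S v x ->
  glue S [ffun j : {i | i \in S} => v (val j)]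
         [ffun j : {i | i \notin S} => x (val j)] = x.
Proof.
move=> Hag; apply/ffunP => i; rewrite ffunE.
case: insubP => [j Hj Hv|Hn]; first by rewrite ffunE Hv Hag.
case: insubP => [j Hj Hv|Hn']; first by rewrite ffunE Hv.
by rewrite Hn in Hn'.
Qed.

Lemma thr' (S : {set 'I_m}) (v : {ffun 'I_m -> X}) d :
  S \proper [set: 'I_m] ->
  exists kd, forall x, agree S v x -> q x = Some d ->
    exists i, i \notin S /\ (x i).2 < kd.
Proof.
move=> HS; have [kd Hkd] := HT HS [ffun j : {i | i \in S} => v (val j)] d.
exists kd => x Hag Hq.
have [i Hi] : exists i, ([ffun j : {i | i \notin S} => x (val j)] i).2 < kd.
  by apply: Hkd; rewrite /pcup glue_restr.
exists (val i); split; first exact: (valP i).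
by move: Hi; rewrite ffunE.
Qed.

Lemma Jimg (S : {set 'I_m}) (v : {ffun 'I_m -> X}) (A : subset_X) :
  inJ A -> forall n : nat, exists s : seq nat, forall (x : {ffun 'I_m -> X}) (a : nat),
    (forall i, i \notin S -> A (x i)) -> agree S v x ->
    q x = Some (a, n) -> a \in s.
Proof.
move=> HA.
pose A' := fun p => A p \/ exists i, p = v i.
have HA' : inJ A'.
  move=> n; have [s Hs] := HA n.
  exists (s ++ [seq (v i).1 | i <- enum 'I_m]) => a [/Hs H|[i Hi]].
    by rewrite mem_cat H.
  rewrite mem_cat; apply/orP; right; apply/mapP; exists i; first by rewrite mem_enum.
  by rewrite -Hi.
move=> n; have [s Hs] := HgJ HA' n; exists s => x a HxA Hag Hq.
apply: Hs; exists x; split; last exact: HgJe.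
move=> i; case: (boolP (i \in S)) => Hi; last by left; apply: HxA.
by right; exists i; apply: Hag.
Qed.

Definition KP (S : {set 'I_m}) (v : {ffun 'I_m -> X}) (n K : nat) :=
  forall x, agree S v x -> forall d, q x = Some d -> d.2 = n ->
    exists i, i \notin S /\ (x i).2 < K.

Lemma Kexists (S : {set 'I_m}) (v : {ffun 'I_m -> X}) (n : nat) : S \proper [set: 'I_m] -> exists K, KP S v n K.
Proof.
move=> HS; apply: NNPP => Hn.
have H : forall K, exists x, agree S v x /\ (exists a, q x = Some (a, n)) /\
    forall i, i \notin S -> K <= (x i).2.
  move=> K; apply: NNPP => HK; apply: Hn; exists K => x Hag d Hq Hd.
  apply: NNPP => Hne; apply: HK; exists x; split => //; split.
    by exists d.1; rewrite Hq -Hd; case: d {Hq Hd}.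
  move=> i Hi; rewrite leqNgt; apply/negP => Hlt; apply: Hne; by exists i.
pose xs K := proj1_sig (constructive_indefinite_description _ (H K)).
have Hxs K : agree S v (xs K) /\ (exists a, q (xs K) = Some (a, n)) /\
    forall i, i \notin S -> K <= (xs K i).2.
  exact: (proj2_sig (constructive_indefinite_description _ (H K))).
pose A := fun p => exists K i, i \notin S /\ p = xs K i.
have HA : inJ A.
  move=> b; exists [seq (xs K i).1 | K <- iota 0 b.+1, i <- enum 'I_m].
  move=> a [K [i [Hi Hp]]].
  have HKb : K <= b by have := (proj2 (proj2 (Hxs K))) i Hi; rewrite -Hp.
  apply/allpairsP; exists (K, i); split.
  - by rewrite mem_iota add0n ltnS HKb.
  - by rewrite mem_enum.
  - by rewrite -Hp.
have [s Hs] := Jimg S v HA n.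
pose kdf a := proj1_sig (constructive_indefinite_description _ (thr' v (a, n) HS)).
have Hkdf a : forall x, agree S v x -> q x = Some (a, n) ->
    exists i, i \notin S /\ (x i).2 < kdf a.
  exact: (proj2_sig (constructive_indefinite_description _ (thr' v (a, n) HS))).
pose KK := \max_(a <- s) kdf a.
have [Hag [[a Hq] Hge]] := Hxs KK.
have Has : a \in s.
  apply: (Hs (xs KK)) => //.
  move=> i Hi; exists KK, i; split => //.
have [i [Hi Hlt]] := Hkdf a _ Hag Hq.
have : kdf a <= KK by rewrite /KK (big_rem a Has) /= leq_maxl.
move=> Hle; have := Hge i Hi; rewrite leqNgt => /negP; apply.
exact: leq_trans Hlt Hle.
Qed.

End KLemma.

Section Construction.
Variable k : nat.
Variable f : op k.
Variable m : nat.
Variable q : pfun 'I_m.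
Variable gJ : op m.
Hypothesis HgJ : inC inJ gJ.
Hypothesis HgJe : forall u y, q u = Some y -> gJ u = y.
Hypothesis HT : hereditarily_thrifty q.
Variable A0 : subset_X.
Hypothesis HA0 : inI A0.
Hypothesis HFJ : inJ (image_pow f A0).
Hypothesis HFnI : ~ inI (image_pow f A0).

Definition lineP N (p : nat * seq nat) :=
  uniq p.2 /\ N <= size p.2 /\ forall a, a \in p.2 -> image_pow f A0 (a, p.1).
Definition linef N := epsilon (inhabits (0, [::])) (lineP N).
Lemma linef_spec N : lineP N (linef N).
Proof. apply: epsilon_spec; exact: big_line. Qed.

Definition preP (t : X) (u : {ffun 'I_k -> X}) := (forall i, A0 (u i)) /\ f u = t.
Definition pre0 t := epsilon (inhabits [ffun _ => (0,0)]) (preP t).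
Definition preG t : {ffun 'I_k -> X} :=
  if pdec (forall i, A0 (pre0 t i)) then pre0 t else [ffun _ => (0,0)].

Lemma preG_range t i : A0 (preG t i) \/ preG t i = (0,0).
Proof.
rewrite /preG; case E: (pdec _); first by left; move/pdecP: E; apply.
by right; rewrite ffunE.
Qed.

Lemma preG_spec t : image_pow f A0 t -> f (preG t) = t.
Proof.
move=> [u Hu]; have Hs : preP t (pre0 t) by apply: epsilon_spec; exists u.
by rewrite /preG; have /pdecP -> := proj1 Hs; exact: (proj2 Hs).
Qed.

Definition Kf (S : {set 'I_m}) (v : {ffun 'I_m -> X}) n :=
  epsilon (inhabits 0) (KP q S v n).
Lemma Kf_spec (S : {set 'I_m}) (v : {ffun 'I_m -> X}) (n : nat) : S \proper [set: 'I_m] -> KP q S v n (Kf S v n).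
Proof. move=> HS; apply: epsilon_spec; exact: (Kexists HgJ HgJe HT). Qed.

Definition nx (x : {ffun 'I_m -> X}) := (odflt (0,0) (q x)).2.
Definition state := ({set 'I_m} * {ffun 'I_m -> X})%type.
Definition pickf (x : {ffun 'I_m -> X}) (st : state) :=
  [pick i | (i \notin st.1) && ((x i).2 < Kf st.1 st.2 (nx x))].
Definition nexts (x : {ffun 'I_m -> X}) (st : state) : state :=
  match pickf x st with
  | Some i => (i |: st.1, [ffun i' => if i' == i then x i else st.2 i'])
  | None => st end.
Definition st0 : state := (set0, [ffun _ => (0,0)]).
Definition sts (x : {ffun 'I_m -> X}) j := iter j (nexts x) st0.
Definition idxf (x : {ffun 'I_m -> X}) (st : state) :=
  match pickf x st with Some i => i + m * (x i).2 | None => 0 end.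
Definition target (x : {ffun 'I_m -> X}) (st : state) : X :=
  let p := linef (m * Kf st.1 st.2 (nx x)) in (nth 0 p.2 (idxf x st), p.1).
Definition phiT (x : {ffun 'I_m -> X}) (j : nat) := preG (target x (sts x j)).
Definition Zv (x : {ffun 'I_m -> X}) (j : nat) := f (phiT x j).

Lemma pick_some (x : {ffun 'I_m -> X}) d (st : state) : q x = Some d ->
  #|st.1| < m -> agree st.1 st.2 x ->
  exists i, pickf x st = Some i /\ i \notin st.1 /\ (x i).2 < Kf st.1 st.2 (nx x).
Proof.
move=> Hq Hc Hag.
have HS : st.1 \proper [set: 'I_m] by rewrite properEcard subsetT cardsT card_ord.
have Hn : d.2 = nx x by rewrite /nx Hq.
have [i [Hi Hlt]] := Kf_spec (n:=nx x) HS Hag Hq Hn.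
rewrite /pickf; case: pickP => [i' /andP [H1 H2]|H]; first by exists i'.
by have := H i; rewrite Hi Hlt.
Qed.

Lemma sts_inv (x : {ffun 'I_m -> X}) d : q x = Some d -> forall j, j <= m ->
  #|(sts x j).1| = j /\ agree (sts x j).1 (sts x j).2 x.
Proof.
move=> Hq; elim => [|j IH] Hj.
  by rewrite /= cards0; split => // i; rewrite inE.
have [Hc Hag] := IH (ltnW Hj).
have Hc' : #|(sts x j).1| < m by rewrite Hc.
have [i [Hp [Hi _]]] := pick_some Hq Hc' Hag.
rewrite /sts iterS -/(sts x j) /nexts Hp /=; split.
  by rewrite cardsU1 Hi Hc.
move=> i'; rewrite in_setU1 ffunE; case: eqP => [->//|_] /= H.
exact: Hag.
Qed.

Lemma sts_full (x : {ffun 'I_m -> X}) d : q x = Some d -> (sts x m).2 = x.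
Proof.
move=> Hq; have [Hc Hag] := sts_inv Hq (leqnn m).
have HS : (sts x m).1 = [set: 'I_m].
  by apply/eqP; rewrite eqEcard subsetT cardsT card_ord Hc leqnn.
by apply/ffunP => i; rewrite Hag // HS inE.
Qed.


Definition expand (cB : nat -> seq nat) (n : nat) (st : state) : seq state :=
  flatten [seq (match [pick i : 'I_m | val i == (index a (linef (m * Kf st.1 st.2 n)).2) %% m] with
     | Some i => [seq (i |: st.1, [ffun i' => if i' == i
                    then (a', (index a (linef (m * Kf st.1 st.2 n)).2) %/ m) else st.2 i'])
                 | a' <- cB ((index a (linef (m * Kf st.1 st.2 n)).2) %/ m)]
     | None => [::] end) | a <- cB (linef (m * Kf st.1 st.2 n)).1].

Definition Ls cB n j :=
  iter j (fun L => flatten [seq expand cB n st | st <- L]) [:: st0].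

Lemma Ls_size (cB : nat -> seq nat) w n j :
  (forall b, size (cB b) <= w) -> size (Ls cB n j) <= (w * w) ^ j.
Proof.
move=> Hw; elim: j => [|j IH] //.
have H1 : forall st, size (expand cB n st) <= w * w.
  move=> st; rewrite /expand.
  have H2 : forall a, size (match [pick i : 'I_m | val i == (index a (linef (m * Kf st.1 st.2 n)).2) %% m] with
     | Some i => [seq (i |: st.1, [ffun i' => if i' == i
                    then (a', (index a (linef (m * Kf st.1 st.2 n)).2) %/ m) else st.2 i'])
                 | a' <- cB ((index a (linef (m * Kf st.1 st.2 n)).2) %/ m)]
     | None => [::] end) <= w.
    by move=> a; case: pickP => [i _|_] //=; rewrite size_map; exact: Hw.
  apply: leq_trans (size_flatten_le _ H2) _.
  by rewrite leq_mul2r Hw orbT.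
rewrite /Ls iterS -/(Ls cB n j) expnS mulnC.
apply: leq_trans (size_flatten_le _ H1) _.
by rewrite leq_mul2r IH orbT.
Qed.

Lemma Ls_mem (B : subset_X) (cB : nat -> seq nat) (n : nat)
  (HcB : forall a b, B (a, b) -> a \in cB b)
  (x : {ffun 'I_m -> X}) d :
  (forall i, B (x i)) -> (forall j, j < m -> B (Zv x j)) ->
  q x = Some d -> d.2 = n -> forall j, j <= m -> sts x j \in Ls cB n j.
Proof.
move=> HxB HZB Hq Hd; elim => [|j IH] Hj; first by rewrite inE.
have [Hc Hag] := sts_inv Hq (ltnW Hj).
have Hc' : #|(sts x j).1| < m by rewrite Hc.
have [i0 [Hp [Hi Hlt]]] := pick_some Hq Hc' Hag.
have Hnx : nx x = n by rewrite /nx Hq.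
rewrite Hnx in Hlt.
rewrite /Ls iterS -/(Ls cB n j); apply/flatten_mapP; exists (sts x j); first exact: IH (ltnW Hj).
have -> : sts x j.+1 = (i0 |: (sts x j).1,
      [ffun i' => if i' == i0 then x i0 else (sts x j).2 i']).
  by rewrite /sts iterS -/(sts x j) /nexts Hp.
set st := sts x j in Hc Hag Hc' Hp Hi Hlt *.
set K := Kf st.1 st.2 n in Hlt *.
have [Hu [Hsz HF]] := linef_spec (m * K).
set p := linef (m * K) in Hu Hsz HF *.
set idx := i0 + m * (x i0).2.
have Hidx : idx < m * K.
  apply: (@leq_trans (m + m * (x i0).2)); first by rewrite ltn_add2r ltn_ord.
  by rewrite -mulnS leq_mul2l Hlt orbT.
have Hidx' : idx < size p.2 by apply: leq_trans Hidx Hsz.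
have Htg : target x st = (nth 0 p.2 idx, p.1).
  by rewrite /target /idxf Hp Hnx.
have HZ : Zv x j = (nth 0 p.2 idx, p.1).
  rewrite /Zv /phiT -/st Htg preG_spec //.
  by apply: HF; rewrite mem_nth.
have HBZ := HZB j Hj; rewrite HZ in HBZ.
apply/flatten_mapP; exists (nth 0 p.2 idx); first exact: HcB.
have Hm : 0 < m by apply: leq_ltn_trans (ltn_ord i0).
have Hmod : idx %% m = i0 by rewrite /idx addnC mulnC modnMDl modn_small.
have Hdiv : idx %/ m = (x i0).2 by rewrite /idx addnC mulnC divnMDl // divn_small ?addn0.
rewrite index_uniq //.
case: pickP => [i /eqP Hie|H]; last by have := H i0; rewrite Hmod eqxx.
have -> : i = i0 by apply: val_inj; rewrite /= Hie Hmod.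
apply/mapP; exists (x i0).1.
  rewrite Hdiv; apply: HcB; rewrite -surjective_pairing; exact: HxB.
by rewrite Hdiv -surjective_pairing.
Qed.

Lemma count_lemma (B : subset_X) (w : nat) (cB : nat -> seq nat) :
  (forall b, size (cB b) <= w) -> (forall a b, B (a,b) -> a \in cB b) ->
  forall n : nat, exists L : seq {ffun 'I_m -> X}, size L <= (w*w)^m /\
    forall (x : {ffun 'I_m -> X}) (d : X), (forall i, B (x i)) -> (forall j, j < m -> B (Zv x j)) ->
      q x = Some d -> d.2 = n -> x \in L.
Proof.
move=> Hw HcB n; exists [seq st.2 | st <- Ls cB n m]; split.
  by rewrite size_map; exact: Ls_size.
move=> x d HxB HZB Hq Hd; apply/mapP; exists (sts x m).
  exact: (Ls_mem HcB HxB HZB Hq Hd (leqnn m)).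
by rewrite (sts_full Hq).
Qed.

Definition hfun (u : {ffun 'I_(m + m) -> X}) : option X :=
  if [forall j : 'I_m, u (rshift m j) == Zv [ffun i => u (lshift m i)] j]
  then q [ffun i => u (lshift m i)] else None.

Lemma hfun_pinC : pinC inI hfun.
Proof.
exists (fun u => odflt (0,0) (hfun u)); split; last by move=> u y ->.
move=> B [w Hw].
pose cB b := proj1_sig (constructive_indefinite_description _ (Hw b)).
have HcB b : size (cB b) <= w /\ forall a, B (a, b) -> a \in cB b.
  exact: (proj2_sig (constructive_indefinite_description _ (Hw b))).
have Hsz b : size (cB b) <= w by case: (HcB b).
have Hmem a b : B (a, b) -> a \in cB b by case: (HcB b) => _; apply.
exists ((w * w) ^ m).+1 => n.
have [L [HL HLm]] := count_lemma Hsz Hmem n.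
exists (0 :: [seq (odflt (0,0) (q x)).1 | x <- L]); split.
  by rewrite /= size_map ltnS.
move=> a [u [HuB Hg]]; move: Hg; rewrite /hfun.
case: ifP => [/forallP Hall|_] /=; last by case=> <- _; rewrite inE eqxx.
case Hq: (q _) => [d|] /=; last by case=> <- _; rewrite inE eqxx.
move=> Hd; rewrite inE; apply/orP; right; apply/mapP.
exists [ffun i => u (lshift m i)]; last by rewrite Hq Hd.
apply: (HLm _ d) => //; last by rewrite Hd.
  by move=> i; rewrite ffunE.
move=> j Hj; have /eqP <- := Hall (Ordinal Hj); exact: HuB.
Qed.

Definition phiop (j : 'I_m) (t : 'I_k) : op m := fun x => phiT x j t.

Lemma phiop_pinC j t : pinC inI (fun u => Some (phiop j t u)).
Proof.
exists (phiop j t); split; last by move=> u y [<-].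
apply: (inC_of_range (inI_add0 HA0)) => u; exact: preG_range.
Qed.

Definition hpop : pop := existT (fun n => pfun 'I_n) (m + m) hfun.
Definition phipop (j : 'I_m) (t : 'I_k) : pop :=
  existT (fun n => pfun 'I_n) m (fun u => Some (phiop j t u)).
Definition hs : list pop :=
  hpop :: [seq phipop jt.1 jt.2 | jt <- enum [set: 'I_m * 'I_k]].
Definition allowed := fun o => o = total_pop f \/ List.In o hs.

Definition phit (j : 'I_m) (t : 'I_k) : pfun 'I_m :=
  compose (projT2 (phipop j t)) (fun i (x : {ffun 'I_m -> X}) => Some (x i)).
Definition zt (j : 'I_m) : pfun 'I_m :=
  compose (projT2 (total_pop f)) (fun t => phit j t).
Definition tts (j : 'I_(m + m)) : pfun 'I_m :=
  match split j with
  | inl i => fun x => Some (x i)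
  | inr j' => zt j' end.
Definition tm : pfun 'I_m := compose (projT2 hpop) tts.

Lemma tm_tf : term_fn allowed tm.
Proof.
apply: (tf_app (o:=hpop) (ts:=tts)); first by right; left.
move=> j; rewrite /tts; case: split => [i|j']; first exact: tf_var.
apply: (tf_app (o:=total_pop f)); first by left.
move=> t; apply: (tf_app (o:=phipop j' t)).
  right; right; apply: (In_map_mem (fun jt => phipop jt.1 jt.2) (y:=(j', t))).
  by rewrite mem_enum inE.
move=> i; exact: tf_var.
Qed.

Lemma compose_vars (g : pfun 'I_m) x :
  compose g (fun i (x : {ffun 'I_m -> X}) => Some (x i)) x = g x.
Proof.
rewrite /compose; have -> : [forall j, Some (x j) != None] by apply/forallP.
by congr g; apply/ffunP => i; rewrite ffunE.
Qed.

Lemma zt_eval j x : zt j x = Some (Zv x j).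
Proof.
rewrite /zt /compose.
have -> : [forall t, phit j t x != None].
  by apply/forallP => t; rewrite /phit compose_vars.
congr Some; rewrite /Zv /=; congr f; apply/ffunP => t.
by rewrite ffunE /phit compose_vars.
Qed.

Lemma tm_eval x : tm x = q x.
Proof.
rewrite /tm /compose.
have -> : [forall j, tts j x != None].
  apply/forallP => j; rewrite /tts; case: split => [i|j'] //.
  by rewrite zt_eval.
set U := [ffun j => _].
have HUl : [ffun i => U (lshift m i)] = x.
  apply/ffunP => i; rewrite !ffunE /tts.
  by rewrite -[lshift m i]/(unsplit (inl i)) unsplitK.
rewrite /= /hfun HUl.
have -> : [forall j : 'I_m, U (rshift m j) == Zv x j] => //.
apply/forallP => j; rewrite ffunE /tts.
by rewrite -[rshift m j]/(unsplit (inr j)) unsplitK zt_eval.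
Qed.

Lemma main_sec : exists hs : list pop,
    (forall h, List.In h hs -> pinC inI (projT2 h)) /\
    exists t : pfun 'I_m,
      term_fn (fun o => o = total_pop f \/ List.In o hs) t /\
      forall x, q x = t x.
Proof.
exists hs; split.
  move=> h [<-|]; first exact: hfun_pinC.
  move/List.in_map_iff => [jt [<- _]]; exact: phiop_pinC.
exists tm; split; first exact: tm_tf.
by move=> x; rewrite tm_eval.
Qed.

End Construction.

Theorem mainTheorem12 (k : nat) (f : op k) (m : nat) (q : pfun 'I_m) :
  inC inJ f -> ~ inC inI f ->
  hereditarily_thrifty q -> pinC inJ q ->
  exists hs : list pop,
    (forall h, List.In h hs -> pinC inI (projT2 h)) /\
    exists t : pfun 'I_m,
      term_fn (fun o => o = total_pop f \/ List.In o hs) t /\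
      forall x, q x = t x.
Proof.
move=> HfJ HfI HT [gJ [HgJ HgJe]].
have [A0 [HA0 HnF]] : exists A, inI A /\ ~ inI (image_pow f A).
  apply: NNPP => Hn; apply: HfI => A HA; apply: NNPP => Hn'; apply: Hn.
  by exists A.
have HFJ : inJ (image_pow f A0) by apply: HfJ; exact: inI_inJ.
exact: (main_sec HgJ HgJe HT HA0 HFJ HnF).
Qed.
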